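(* Let $a<b$ be elements of $\mathcal{C}_n$ and let $N^{[a]}\left(\mathcal{STR}^{(n)}\{a,b\}\right)=\{a_\ell b_{n-\ell}:\ b+1\le\ell\le n\}$. Then $N^{[a]}\left(\mathcal{STR}^{(n)}\{a,b\}\right)$ is a subsemiring of $\mathcal{STR}^{(n)}\{a,b\}$, and it consists exactly of all $a$-nilpotent elements of $\mathcal{STR}^{(n)}\{a,b\}$, i.e. of all $\alpha\in\mathcal{STR}^{(n)}\{a,b\}$ with $\alpha^m=\overline{a}$ for some natural number $m$.
   Context: $\mathcal{C}_n=\{0,1,\dots,n-1\}$ with its usual order; $\widehat{\mathcal{E}}_{\mathcal{C}_n}$ is the set of all order-preserving maps $\mathcal{C}_n\to\mathcal{C}_n$ (not required to fix $0$), a semiring with $(\alpha+\beta)(x)=\max(\alpha(x),\beta(x))$ and $(\alpha\cdot\beta)(x)=\beta(\alpha(x))$. The string $\mathcal{STR}^{(n)}\{a,b\}$ is the set of $\alpha\in\widehat{\mathcal{E}}_{\mathcal{C}_n}$ with image in $\{a,b\}$; its elements are written $a_kb_{n-k}$ ($0\le k\le n$), the map sending $0,\dots,k-1$ to $a$ and $k,\dots,n-1$ to $b$; $\overline{a}=a_nb_0$ and $\overline{b}=a_0b_n$ are the constant maps. *)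

(* Defs.v *)
From mathcomp Require Import all_boot all_order.
Set Implicit Arguments. Unset Strict Implicit. Unset Printing Implicit Defensive.

(* C_n = 'I_n with its usual order; elements of \hat E_{C_n} are
   order-preserving maps, represented as finite functions. *)
Definition ordmap (n : nat) := {ffun 'I_n -> 'I_n}.

Definition order_preserving n (f : ordmap n) : Prop :=
  forall x y : 'I_n, x <= y -> f x <= f y.

Definition eadd n (f g : ordmap n) : ordmap n :=
  [ffun x => if f x <= g x then g x else f x].
Definition emul n (f g : ordmap n) : ordmap n := [ffun x => g (f x)].
Definition eone n : ordmap n := [ffun x => x].

Fixpoint epow n (f : ordmap n) (m : nat) : ordmap n :=
  match m with 0 => eone n | m'.+1 => emul (epow f m') f end.

Definition in_STR n (a b : 'I_n) (f : ordmap n) : Prop :=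
  order_preserving f /\ (forall x, f x = a \/ f x = b).

(* a_k b_{n-k} : sends 0..k-1 to a and k..n-1 to b *)
Definition str_elem n (a b : 'I_n) (k : nat) : ordmap n :=
  [ffun x : 'I_n => if (x : nat) < k then a else b].

Definition ebar n (a : 'I_n) : ordmap n := [ffun _ => a].

Definition Nset n (a b : 'I_n) (f : ordmap n) : Prop :=
  exists l : nat, (b.+1 <= l <= n) /\ f = str_elem a b l.

(* Main.v *)
Require Import Defs.
From mathcomp Require Import all_boot all_order.

Lemma epow_fix n (f : ordmap n) x : f x = x -> forall m, epow f m x = x.
Proof. move=> fx; elim=> [|m IH] /=; by rewrite ffunE ?IH. Qed.

Lemma str_in n (a b : 'I_n) l : a < b -> in_STR a b (str_elem a b l).
Proof.
move=> hab; split.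
- move=> x y xy; rewrite !ffunE.
  case: (ltnP y l) => hy; first by rewrite (leq_ltn_trans xy hy).
  by case: ifP => _ //; apply: ltnW.
- by move=> x; rewrite ffunE; case: ifP; [left|right].
Qed.

Theorem proposition9 (n : nat) (a b : 'I_n) (hab : a < b) :
  (* subsemiring of STR: contained in it, closed under + and . *)
  ((forall f, Nset a b f -> in_STR a b f) /\
   (forall f g, Nset a b f -> Nset a b g -> Nset a b (eadd f g)) /\
   (forall f g, Nset a b f -> Nset a b g -> Nset a b (emul f g))) /\
  (* exactly the a-nilpotent elements of STR *)
  (forall f, in_STR a b f -> (Nset a b f <-> exists m : nat, epow f m = ebar a)).
Proof.
have bn : b < n := ltn_ord b.
have ab : a <> b by move=> e; move: hab; rewrite e ltnn.
have fa : forall l, b < l -> str_elem a b l a = a.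
  by move=> l hl; rewrite ffunE (ltn_trans hab hl).
have fb : forall l, b < l -> str_elem a b l b = a.
  by move=> l hl; rewrite ffunE hl.
split; [split; [|split]|].
- by move=> f [l [_ ->]]; apply: str_in.
- move=> f g [l [/andP [l1 l2] ->]] [k [/andP [k1 k2] ->]].
  exists (minn l k); split; first by rewrite leq_min l1 k1 geq_min l2.
  apply/ffunP=> x; rewrite !ffunE leq_min.
  case: (ltnP x l) => hl; case: (ltnP x k) => hk /=; rewrite ?leqnn //.
  - by rewrite (ltnW hab).
  - by rewrite leqNgt hab.
- move=> f g [l [/andP [l1 l2] ->]] [k [/andP [k1 k2] ->]].
  exists n; split; first by rewrite bn leqnn.
  apply/ffunP=> x; rewrite !ffunE ltn_ord.
  by case: (ltnP x l) => _ /=; rewrite ?(ltn_trans hab k1) ?k1.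
move=> f [fmon fab]; split.
- move=> [l [/andP [l1 l2] ->]]; exists 2.
  apply/ffunP=> x; rewrite /= !ffunE.
  by case: (ltnP x l) => _ /=; rewrite ?(ltn_trans hab l1) ?l1.
move=> [m hm].
have fbA : f b = a.
  case: (fab b) => // e.
  have := @epow_fix _ _ _ e m; rewrite hm ffunE => e'; by case: ab.
pose g k := if insub k is Some x then f x == a else false.
have ex : exists k, ~~ g k by exists n; rewrite /g insubN ?ltnn.
case: (ex_minnP ex) => l hl lmin.
have key : forall x : 'I_n, f x = if (x : nat) < l then a else b.
  move=> x; case: ifP => hx.
  - apply/eqP; apply: contraLR hx => nx; rewrite -leqNgt; apply: lmin.
    by rewrite /g valK.
  - have ln : l < n by rewrite (leq_ltn_trans _ (ltn_ord x)) // leqNgt hx.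
    move: hl; rewrite /g insubT => /= hfl.
    case: (fab x) => // e.
    have := fmon (Ordinal ln) x; rewrite leqNgt hx e => /(_ isT).
    case: (fab (Ordinal ln)) => e2; first by move: hfl; rewrite e2 eqxx.
    by rewrite e2 leqNgt hab.
exists l; split.
- apply/andP; split.
  + rewrite ltnNge; apply/negP => bl.
    by move: fbA; rewrite key ltnNge bl => /esym.
  + by rewrite leqNgt; apply/negP => nl; move: (lmin n); rewrite /g insubN ?ltnn // leqNgt nl => /(_ isT).
- by apply/ffunP=> x; rewrite key ffunE.
Qed.
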